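(* Let $n,m\in\mathbb{N}$, $p\in(0,1]$, and let $f$ be a score function single-peaked at $p$. Let $\eta\in\mathbb{N}$. If there exists a set of static documents $T\subseteq D$ with $|T|=\eta$ such that the corpus-enriched game $G_T=\langle n,m,p,T\rangle$ has a pure equilibrium, then there exists a threshold vector $\vec t\in[0,1]^m$ with $\|\vec t\|_1=\sum_{j=1}^m \vec t_j\le \eta$ such that the ranking game with thresholds $G_{\vec t}=\langle n,m,p,\vec t\rangle$ has a pure equilibrium.
   Context: Setting: $n$ players (publishers), $m$ queries $q_1,\dots,q_m$, a peak value $p\in(0,1]$ and a score function $f:[0,1]\to[0,1]$ single-peaked at $p$ ($p$ is the unique point such that $f$ is non-decreasing on $[0,p]$ and non-increasing on $[p,1]$). Each player $i$ chooses a document $d_i\in D=\{d=(d^1,\dots,d^m)\in[0,1]^m:\sum_j d^j\le 1\}$; its score for $q_j$ is $f(d_i^j)$. A strategy profile is $s=(d_1,\dots,d_n)$. Each winner of a query shares it uniformly: if $q_j$ has $h_j$ winners each gets $1/h_j$; a player's utility is the sum of its shares over queries. Corpus-enriched game $G_T=\langle n,m,p,T\rangle$: $T\subseteq D$ is a finite set of static (dummy) documents; a player's document can be top-ranked for $q_j$ only if its score is at least $\max_{d\in T}f(d^j)$ (ties with static documents are broken in favour of players); among such player documents, those of highest score are the winners of $q_j$; if none, no player wins $q_j$. Ranking game with thresholds $G_{\vec t}=\langle n,m,p,\vec t\rangle$, $\vec t\in[0,1]^m$: player $i$'s document is eligible for $q_j$ iff $d_i^j\ge\vec t_j$; among eligible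 player documents those of highest score win $q_j$ (uniform sharing); if none is eligible, no player wins $q_j$. In either game, a pure equilibrium is a pure Nash equilibrium (no player can strictly increase her utility by unilaterally changing her document) in which every query is won by at least one player. *)

(* Defs.v *)
From HB Require Import structures.
From mathcomp Require Import all_boot all_order all_algebra.
From mathcomp Require Import reals.
Set Implicit Arguments. Unset Strict Implicit. Unset Printing Implicit Defensive.
Import Order.TTheory GRing.Theory Num.Theory.
Local Open Scope ring_scope.

Section Games.
Variable R : realType.

Definition doc (m : nat) := {ffun 'I_m -> R}.

Definition in_D (m : nat) (d : doc m) : Prop :=
  (forall j, 0 <= d j <= 1) /\ \sum_(j < m) d j <= 1.

Definition peak_shape (f : R -> R) (q : R) : Prop :=
  (forall x y, 0 <= x -> x <= y -> y <= q -> f x <= f y) /\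
  (forall x y, q <= x -> x <= y -> y <= 1 -> f y <= f x).

Definition single_peaked (f : R -> R) (p : R) : Prop :=
  (forall x, 0 <= x <= 1 -> 0 <= f x <= 1) /\
  0 <= p <= 1 /\ peak_shape f p /\
  (forall q, 0 <= q <= 1 -> peak_shape f q -> q = p).

Definition profile (n m : nat) := 'I_n -> doc m.

Definition deviate n m (s : profile n m) (i : 'I_n) (d : doc m) : profile n m :=
  fun k => if k == i then d else s k.

(* Generic game: [elig j d] says the player document d is eligible for q_j.
   Among eligible player documents, those of highest score f (d j) win. *)
Definition wins n m (f : R -> R) (elig : 'I_m -> doc m -> bool)
    (s : profile n m) (i : 'I_n) (j : 'I_m) : bool :=
  elig j (s i) && [forall k : 'I_n, elig j (s k) ==> (f (s k j) <= f (s i j))].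

Definition nwinners n m f elig (s : profile n m) (j : 'I_m) : nat :=
  #|[set k : 'I_n | wins f elig s k j]|.

Definition utility n m f elig (s : profile n m) (i : 'I_n) : R :=
  \sum_(j < m) (if wins f elig s i j then (nwinners f elig s j)%:R^-1 else 0).

Definition pure_equilibrium n m f elig (s : profile n m) : Prop :=
  (forall i, in_D (s i)) /\
  (forall (i : 'I_n) (d : doc m), in_D d ->
      utility f elig (deviate s i d) i <= utility f elig s i) /\
  (forall j : 'I_m, exists i : 'I_n, wins f elig s i j).

Definition has_pure_equilibrium n m f (elig : 'I_m -> doc m -> bool) : Prop :=
  exists s : profile n m, pure_equilibrium f elig s.

(* Corpus-enriched game G_T: a player document is eligible for q_j iff its
   score is at least the score of every static document (ties favour players). *)
Definition corpus_elig m (f : R -> R) (T : seq (doc m)) (j : 'I_m) (d : doc m) : bool :=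
  all (fun t : doc m => f (t j) <= f (d j)) T.

Definition thr_elig m (t : 'I_m -> R) (j : 'I_m) (d : doc m) : bool :=
  t j <= d j.

End Games.

(* Main.v *)
Require Import Defs.
From HB Require Import structures.
From mathcomp Require Import all_boot all_order all_algebra.
From mathcomp Require Import reals.
Import Order.TTheory GRing.Theory Num.Theory.
Local Open Scope ring_scope.
Set Implicit Arguments. Unset Strict Implicit.

Lemma fmax_lem (R : realType) (f : R -> R) (p : R) :
  single_peaked f p -> forall y, 0 <= y <= 1 -> f y <= f p.
Proof.
case=> _ [/andP[p0 p1] [[inc dec] _]] y /andP[y0 y1].
case: (lerP y p) => [yp|/ltW py]; first exact: inc.
exact: dec.
Qed.

Lemma foldmin_le (R : realType) (p : R) (L : seq R) x :
  x \in L -> foldr Num.min p L <= x.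
Proof.
elim: L => //= a L IH; rewrite inE => /orP[/eqP->|/IH h].
  by rewrite ge_min lexx.
by rewrite ge_min h orbT.
Qed.

Lemma foldmin_lep (R : realType) (p : R) (L : seq R) :
  foldr Num.min p L <= p.
Proof. by elim: L => //= a L IH; rewrite ge_min IH orbT. Qed.

Lemma foldmin_mem (R : realType) (p : R) (L : seq R) :
  foldr Num.min p L \in p :: L.
Proof.
elim: L => /= [|a L IH]; first by rewrite inE.
rewrite minEle; case: ifP => _; first by rewrite !inE eqxx orbT.
move: IH; rewrite !inE => /orP[->//|->]; by rewrite !orbT.
Qed.

Lemma argmax_lem (R : realType) (X : eqType) (g : X -> R) (T : seq X) :
  T != [::] -> exists2 d, d \in T & forall e, e \in T -> g e <= g d.
Proof.
elim: T => // a T IH _.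
have [->|TN] := eqVneq T [::].
  by exists a; rewrite ?inE ?eqxx // => e; rewrite inE => /eqP->.
have [d dT dM] := IH TN.
case: (lerP (g a) (g d)) => [ad|/ltW da].
  exists d; first by rewrite inE dT orbT.
  by move=> e; rewrite inE => /orP[/eqP->//|/dM].
exists a; first by rewrite inE eqxx.
move=> e; rewrite inE => /orP[/eqP->//|/dM h]; exact: le_trans h da.
Qed.

Lemma le_sum_seq (R : realType) (X : eqType) (F : X -> R) (T : seq X) x :
  x \in T -> (forall y, y \in T -> 0 <= F y) -> F x <= \sum_(y <- T) F y.
Proof.
elim: T => // a T IH; rewrite inE big_cons => xin H.
have H' : forall y, y \in T -> 0 <= F y by move=> y yT; apply H; rewrite inE yT orbT.
have s0 : 0 <= \sum_(y <- T) F y by rewrite big_seq; apply: sumr_ge0 => y /H'.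
have a0 : 0 <= F a by apply H; rewrite inE eqxx.
case/orP: xin => [/eqP->|xT]; first by rewrite lerDl.
by rewrite (le_trans (IH xT H')) // lerDr.
Qed.

Lemma sum_docs (R : realType) m (T : seq (doc R m)) :
  (forall d, d \in T -> in_D d) ->
  \sum_(d <- T) \sum_(j < m) d j <= (size T)%:R.
Proof.
elim: T => [|a T IH] H; first by rewrite big_nil.
rewrite big_cons /= mulrS lerD //.
  by case: (H a (mem_head _ _)).
by apply: IH => d dT; apply: H; rewrite inE dT orbT.
Qed.

Lemma notelig (R : realType) m (f : R -> R) (T : seq (doc R m)) j (a b : doc R m) :
  ~~ corpus_elig f T j a -> corpus_elig f T j b -> f (a j) <= f (b j).
Proof.
case/allPn=> d dT /=; rewrite -ltNge => lt /allP /(_ d dT) /= le.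
exact: le_trans (ltW lt) le.
Qed.

Unset Implicit Arguments. Set Strict Implicit.

Theorem lemma1 (R : realType) (n m : nat) (p : R) (f : R -> R) (eta : nat) :
  0 < p <= 1 ->
  single_peaked f p ->
  (exists T : seq (doc R m),
      [/\ uniq T, size T = eta, (forall d, d \in T -> in_D d) &
          @has_pure_equilibrium R n m f (corpus_elig f T)]) ->
  exists t : 'I_m -> R,
    [/\ (forall j, 0 <= t j <= 1), \sum_(j < m) t j <= eta%:R &
        @has_pure_equilibrium R n m f (thr_elig t)].
Proof.
move=> /andP[p0 p1] Hf [T [uT sT TD [s [sD [sNE sW]]]]].
have fmx := fmax_lem Hf.
have [_ [_ [[inc dec] _]]] := Hf.
set elT := corpus_elig f T.
pose P (j : 'I_m) (x : R) := (0 <= x <= p) && all (fun d : doc R m => f (d j) <= f x) T.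
pose L j := [seq x <- [seq s k j | k <- enum 'I_n] ++ map (fun d : doc R m => d j) T ++ [:: 0] | P j x].
pose t j := foldr Num.min p (L j).
have Pp : forall j, P j p.
  move=> j; rewrite /P lexx ltW //=; apply/allP => d dT.
  by apply: fmx; case: (TD d dT) => H _; apply: H.
have tP : forall j, P j (t j).
  move=> j; rewrite /t; have := foldmin_mem p (L j); rewrite inE => /orP[/eqP->//|].
  by rewrite mem_filter => /andP[].
have t_elig : forall j k, elT j (s k) -> t j <= s k j.
  move=> j k ek; case: (lerP (s k j) p) => [skp|/ltW pk].
    apply: foldmin_le; rewrite mem_filter /P skp (_ : all _ T = true) ?andbT; last exact: ek.
    have [H _] := sD k; have /andP[-> _] := H j.
    rewrite mem_cat; apply/orP; left; apply/mapP; exists k => //; exact: mem_enum.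
  exact: le_trans (foldmin_lep _ _) pk.
have mid : forall j x, t j <= x <= p -> forall d : doc R m, d \in T -> f (d j) <= f x.
  move=> j x /andP[tx xp] d dT.
  have /andP[/andP[t0 _] /allP /(_ d dT) /= h] := tP j.
  apply: le_trans h _; exact: inc.
have t_sum : forall j, t j <= \sum_(d <- T) d j.
  move=> j; have [T0|TN] := eqVneq T [::].
    rewrite T0 big_nil; apply: foldmin_le.
    by rewrite mem_filter /P T0 lexx ltW //= !mem_cat mem_seq1 eqxx !orbT.
  have [d0 d0T d0M] := argmax_lem (fun d : doc R m => f (d j)) TN.
  have d0pos : forall d, d \in T -> 0 <= d j.
    by move=> d dT; case: (TD d dT) => H _; case/andP: (H j).
  apply: le_trans (le_sum_seq d0T d0pos).
  case: (lerP (d0 j) p) => [dp|/ltW pd].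
    apply: foldmin_le; rewrite mem_filter /P dp d0pos //=.
    rewrite (_ : all _ T = true); last by apply/allP => e /d0M.
    rewrite !mem_cat; apply/orP; right; apply/orP; left; by apply/mapP; exists d0.
  exact: le_trans (foldmin_lep _ _) pd.
exists t; split.
- by move=> j; have /andP[/andP[-> h] _] := tP j; rewrite (le_trans h p1).
- apply: le_trans (ler_sum _ (fun j _ => t_sum j)) _.
  by rewrite exchange_big /= -sT; apply: sum_docs.
exists s.
have weq : forall i j, wins f (thr_elig t) s i j = wins f elT s i j.
  move=> i j; rewrite /wins /thr_elig; apply/idP/idP.
    case/andP=> ti /forallP H; have [w /andP[ew /forallP Hw]] := sW j.
    have fw : f (s w j) <= f (s i j) := implyP (H w) (t_elig _ _ ew).
    have ei : elT j (s i).
      apply/allP => d dT /=; have /= h := allP ew d dT; exact: le_trans h fw.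
    rewrite ei /=; apply/forallP => k; apply/implyP => ek.
    exact: implyP (H k) (t_elig _ _ ek).
  case/andP=> ei /forallP H; rewrite t_elig //=; apply/forallP => k; apply/implyP => _.
  have [ek|nek] := boolP (elT j (s k)); first exact: implyP (H k) ek.
  exact: notelig nek ei.
have nweq : forall j, nwinners f (thr_elig t) s j = nwinners f elT s j.
  by move=> j; rewrite /nwinners; apply: eq_card => k; rewrite !inE weq.
have ueq : forall i, utility f (thr_elig t) s i = utility f elT s i.
  by move=> i; rewrite /utility; apply: eq_bigr => j _; rewrite weq nweq.
split => //; split; last by move=> j; have [i Hi] := sW j; exists i; rewrite weq.
move=> i d dD; rewrite ueq.
pose d' : doc R m := [ffun j => Num.min (d j) p].
have d'D : in_D d'.
  have [H S] := dD; split.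
    move=> j; rewrite ffunE le_min ge_min; have /andP[-> ->] := H j.
    by rewrite (ltW p0).
  apply: le_trans S; apply: ler_sum => j _; by rewrite ffunE ge_min lexx.
apply: le_trans (sNE i d' d'D).
apply: ler_sum => j _.
set s1 := deviate s i d; set s2 := deviate s i d'.
have s1i : s1 i = d by rewrite /s1 /deviate eqxx.
have s2i : s2 i = d' by rewrite /s2 /deviate eqxx.
have s1k : forall k, k != i -> s1 k = s k by move=> k ki; rewrite /s1 /deviate (negbTE ki).
have s2k : forall k, k != i -> s2 k = s k by move=> k ki; rewrite /s2 /deviate (negbTE ki).
case Hw: (wins f (thr_elig t) s1 i j); last first.
  by case: ifP => _ //; rewrite invr_ge0 ler0n.
have Hw' := Hw; rewrite /wins s1i /thr_elig in Hw'.
case/andP: Hw' => tx /forallP Hk.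
have [dD1 _] := dD.
have ffx : f (d j) <= f (d' j).
  rewrite /d' ffunE minEle; case: ifP => // /negbT; rewrite -ltNge => /ltW pd.
  exact: fmx.
have ex' : elT j d'.
  apply/allP => e eT; apply: mid => //.
  have /andP[/andP[_ tp] _] := tP j.
  by rewrite /d' ffunE le_min tx tp ge_min lexx orbT.
have W2 : wins f elT s2 i j.
  rewrite /wins s2i ex' /=; apply/forallP => k; apply/implyP.
  case: (eqVneq k i) => [->|ki]; first by rewrite s2i lexx.
  rewrite s2k // => ek.
  have := implyP (Hk k); rewrite s1k // => h; exact: le_trans (h (t_elig _ _ ek)) ffx.
have sub : [set k | wins f elT s2 k j] \subset [set k | wins f (thr_elig t) s1 k j].
  apply/subsetP => k; rewrite !inE; case: (eqVneq k i) => [->|ki]; first by rewrite Hw.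
  rewrite /wins s2k // s1k // => /andP[ek /forallP Hl].
  rewrite /thr_elig t_elig //=; apply/forallP => l; apply/implyP.
  case: (eqVneq l i) => [->|li].
    rewrite s1i => _; have := implyP (Hl i); rewrite s2i => /(_ ex') h.
    exact: le_trans ffx h.
  rewrite s1k // => tl; have [el|nel] := boolP (elT j (s l)).
    by have := implyP (Hl l); rewrite s2k // => /(_ el).
  exact: notelig nel ek.
have pos2 : (0 < nwinners f elT s2 j)%N.
  by apply/card_gt0P; exists i; rewrite inE.
have W2' : wins f (corpus_elig f T) s2 i j := W2.
rewrite W2' lef_pV2 ?posrE ?ltr0n ?ler_nat //; last exact: leq_trans pos2 (subset_leq_card sub).
exact: subset_leq_card sub.
Qed.
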